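(* Let $\{A_j\}_{j=1}^m$ be Hermitian $n\times n$ matrices and $n\geq r$. If the map $\beta:\mathbb{C}^{n\times r}/U(r)\to\mathbb{R}^m$, $\beta_j(z)=\mathrm{Re}\,\mathrm{tr}(A_jzz^* )$, is injective, then $$a_0=\inf\Big\{\frac{\|\beta(x)-\beta(y)\|_2^2}{\|xx^*-yy^*\|_2^2}: x,y\in\mathbb{C}^{n\times r},\ xx^*\neq yy^*\Big\}>0.$$
   Context: $\mathbb{C}^{n\times r}/U(r)$ is the set of classes under $x\sim y$ iff $x=yU$ with $U$ unitary; $\beta$ is well defined on classes. $\|\cdot\|_2$ is the Euclidean/Frobenius norm. *)

(* Defs.v *)
From HB Require Import structures.
From mathcomp Require Import all_boot all_order all_algebra.
From mathcomp Require Import complex.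
From mathcomp Require Import all_classical all_reals.
From mathcomp Require Import ereal.
Set Implicit Arguments. Unset Strict Implicit. Unset Printing Implicit Defensive.
Import Order.TTheory GRing.Theory Num.Theory.
Local Open Scope ring_scope.
Local Open Scope complex_scope.

Definition adj (R : realType) (p q : nat) (z : 'M[R[i]]_(p, q)) : 'M[R[i]]_(q, p) :=
  (map_mx (@conjc R) z)^T.

Definition is_hermitian (R : realType) (n : nat) (A : 'M[R[i]]_n) : Prop :=
  adj A = A.

Definition is_unitary (R : realType) (r : nat) (U : 'M[R[i]]_r) : Prop :=
  U *m adj U = 1%:M.

Definition beta (R : realType) (n r m : nat) (A : 'I_m -> 'M[R[i]]_n)
  (z : 'M[R[i]]_(n, r)) : 'I_m -> R :=
  fun j => complex.Re (\tr (A j *m z *m adj z)).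

Definition beta_injective_mod_U (R : realType) (n r m : nat)
  (A : 'I_m -> 'M[R[i]]_n) : Prop :=
  forall x y : 'M[R[i]]_(n, r), beta A x =1 beta A y ->
    exists U : 'M[R[i]]_r, is_unitary U /\ x = y *m U.

Definition vnorm2 (R : realType) (m : nat) (v : 'I_m -> R) : R :=
  \sum_(j < m) v j ^+ 2.

Definition frob2 (R : realType) (p q : nat) (M : 'M[R[i]]_(p, q)) : R :=
  \sum_(i < p) \sum_(j < q) (complex.Re (M i j) ^+ 2 + complex.Im (M i j) ^+ 2).

(* a_0 as an extended real: the infimum (+oo for an empty set) *)
Definition a0 (R : realType) (n r m : nat) (A : 'I_m -> 'M[R[i]]_n) : \bar R :=
  ereal_inf [set (t%:E)%E | t in
    [set t : R | exists x y : 'M[R[i]]_(n, r),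
       x *m adj x != y *m adj y /\
       t = vnorm2 (fun j => beta A x j - beta A y j)
           / frob2 (x *m adj x - y *m adj y)]]%classic.

(* Main.v *)
Require Import Defs.
From HB Require Import structures.
From mathcomp Require Import all_boot all_order all_algebra.
From mathcomp Require Import complex.
From mathcomp Require Import all_classical all_reals.
From mathcomp Require Import ereal.
From mathcomp Require Import sesquilinear spectral.
From mathcomp Require Import ring lra.
Set Implicit Arguments. Unset Strict Implicit. Unset Printing Implicit Defensive.
Import Order.TTheory GRing.Theory Num.Theory.
Local Open Scope ring_scope.

Module Part1.
Local Open Scope ring_scope.
Local Open Scope sesquilinear_scope.
Local Open Scope complex_scope.

Section Alg.
Variable R : realType.
Local Notation C := (R[i]).

Lemma adjE p q (M : 'M[C]_(p, q)) : adj M = M ^t* .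
Proof. by rewrite /adj map_trmx. Qed.

Lemma adjM p q s (A : 'M[C]_(p, q)) (B : 'M[C]_(q, s)) :
  adj (A *m B) = adj B *m adj A.
Proof. by rewrite /adj map_mxM trmx_mul. Qed.

Lemma adjK p q (A : 'M[C]_(p, q)) : adj (adj A) = A.
Proof. by rewrite !adjE trmxCK. Qed.

Lemma adjD p q (A B : 'M[C]_(p, q)) : adj (A + B) = adj A + adj B.
Proof. by rewrite /adj map_mxD linearD. Qed.

Lemma adjN p q (A : 'M[C]_(p, q)) : adj (- A) = - adj A.
Proof. by rewrite /adj map_mxN linearN. Qed.

Lemma adjB p q (A B : 'M[C]_(p, q)) : adj (A - B) = adj A - adj B.
Proof. by rewrite adjD adjN. Qed.

Lemma adjZ p q c (A : 'M[C]_(p, q)) : adj (c *: A) = (Num.conj c) *: adj A.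
Proof. by apply/matrixP => i j; rewrite !mxE rmorphM. Qed.

Lemma adj_entry p q (A : 'M[C]_(p, q)) i j : adj A i j = Num.conj (A j i).
Proof. by rewrite !mxE. Qed.

Lemma ReD (x y : C) : complex.Re (x + y) = complex.Re x + complex.Re y.
Proof. by case: x; case: y. Qed.
Lemma ImD (x y : C) : complex.Im (x + y) = complex.Im x + complex.Im y.
Proof. by case: x; case: y. Qed.
Lemma Re0 : complex.Re (0 : C) = 0. Proof. by []. Qed.
Lemma Im0 : complex.Im (0 : C) = 0. Proof. by []. Qed.
Lemma ReN (x : C) : complex.Re (- x) = - complex.Re x. Proof. by case: x. Qed.
Lemma ImN (x : C) : complex.Im (- x) = - complex.Im x. Proof. by case: x. Qed.
Lemma ReB (x y : C) : complex.Re (x - y) = complex.Re x - complex.Re y.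
Proof. by rewrite ReD ReN. Qed.
Lemma ImB (x y : C) : complex.Im (x - y) = complex.Im x - complex.Im y.
Proof. by rewrite ImD ImN. Qed.
Lemma ReM (x y : C) : complex.Re (x * y) = complex.Re x * complex.Re y - complex.Im x * complex.Im y.
Proof. by case: x; case: y. Qed.
Lemma ImM (x y : C) : complex.Im (x * y) = complex.Re x * complex.Im y + complex.Im x * complex.Re y.
Proof. by case: x => a b; case: y => c d /=; ring. Qed.
Lemma Re_sum I (s : seq I) (P : pred I) (F : I -> C) :
  complex.Re (\sum_(i <- s | P i) F i) = \sum_(i <- s | P i) complex.Re (F i).
Proof. exact: (big_morph _ ReD Re0). Qed.
Lemma Im_sum I (s : seq I) (P : pred I) (F : I -> C) :
  complex.Im (\sum_(i <- s | P i) F i) = \sum_(i <- s | P i) complex.Im (F i).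
Proof. exact: (big_morph _ ImD Im0). Qed.
Lemma ReC (a : R) : complex.Re (a%:C)%C = a. Proof. by []. Qed.
Lemma ImC (a : R) : complex.Im (a%:C)%C = 0. Proof. by []. Qed.
Lemma Re_conj (x : C) : complex.Re (Num.conj x) = complex.Re x. Proof. by case: x. Qed.
Lemma Im_conj (x : C) : complex.Im (Num.conj x) = - complex.Im x. Proof. by case: x. Qed.

Lemma mul_conj_norm (z : C) : z * Num.conj z = ((complex.Re z)^+2 + (complex.Im z)^+2)%:C.
Proof. case: z => a b; apply/eqP; rewrite eq_complex /= ; apply/andP; split; apply/eqP; ring. Qed.

Lemma frob2E p q (M : 'M[C]_(p, q)) : frob2 M = complex.Re (\tr (M *m adj M)).
Proof.
rewrite /frob2 /mxtrace.
rewrite Re_sum; apply: eq_bigr => i _; rewrite !mxE Re_sum.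
by apply: eq_bigr => j _; rewrite !mxE mul_conj_norm.
Qed.

End Alg.

End Part1.
Import Part1.

Module Part2.
Local Open Scope ring_scope.
Local Open Scope sesquilinear_scope.
Local Open Scope complex_scope.

Section Spec.
Variable R : realType.
Local Notation C := (R[i]).

Lemma real_C (x : C) : x \is Num.real -> x = (complex.Re x)%:C.
Proof.
rewrite CrealE; case: x => a b /eqP [] /= hb.
by apply/eqP; rewrite eq_complex /= eqxx /=; apply/eqP; lra.
Qed.

Lemma spectral_herm n (D : 'M[C]_n) : adj D = D ->
  exists (P : 'M[C]_n) (l : 'I_n -> R), P \is unitarymx /\
    D = adj P *m diag_mx (\row_i (l i)%:C) *m P.
Proof.
move=> hD.
have hH : D \is hermsymmx.
  by rewrite qualifE /= expr0 scale1r -map_trmx -/(adj D) hD.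
have /orthomx_spectralP hsp := hermitian_normalmx hH.
have hre := hermitian_spectral_diag_real hH.
exists (spectralmx D), (fun i => complex.Re (spectral_diag D 0 i)); split.
  exact: spectral_unitarymx.
rewrite {1}hsp (invmx_unitary (spectral_unitarymx D)) -(adjE (spectralmx D)); congr (_ *m _ *m _).
congr diag_mx; apply/rowP => i; rewrite mxE.
by apply: real_C; move/mxOverP: hre; apply.
Qed.

End Spec.

End Part2.
Import Part2.

Module Part3.
Local Open Scope ring_scope.
Local Open Scope sesquilinear_scope.
Local Open Scope complex_scope.

Section Inertia.
Variable R : realType.
Local Notation C := (R[i]).

Definition Dm n (l : 'I_n -> R) : 'M[C]_n := diag_mx (\row_i (l i)%:C).
Definition nsq (z : C) : R := complex.Re z ^+ 2 + complex.Im z ^+ 2.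

Lemma nsq_ge0 z : 0 <= nsq z.
Proof. by rewrite /nsq addr_ge0 // sqr_ge0. Qed.

Lemma nsq_eq0 z : nsq z = 0 -> z = 0.
Proof.
case: z => a b; rewrite /nsq /= => /eqP; rewrite paddr_eq0 ?sqr_ge0 //.
by rewrite !sqrf_eq0 => /andP[/eqP -> /eqP ->].
Qed.

Lemma nsq0 : nsq 0 = 0.
Proof. by rewrite /nsq /= expr0n /= addr0. Qed.

Lemma unitary_mulC n (P : 'M[C]_n) : P \is unitarymx -> P *m adj P = 1%:M.
Proof. by move/unitarymxP; rewrite adjE. Qed.

Lemma unitary_mulCl n (P : 'M[C]_n) : P \is unitarymx -> adj P *m P = 1%:M.
Proof.
move=> hP; rewrite adjE -invmx_unitary //; apply: mulVmx.
exact: unitarymx_unit.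
Qed.

Lemma adj_Dm n (l : 'I_n -> R) : adj (Dm l) = Dm l.
Proof.
apply/matrixP => i j; rewrite !mxE eq_sym.
case: eqP => [->|_]; rewrite /= ?mulr1n ?mulr0n.
  by apply/eqP; rewrite eq_complex /= oppr0 !eqxx.
by apply/eqP; rewrite eq_complex /= oppr0 !eqxx.
Qed.

Lemma ReMC (c : R) (z : C) : complex.Re (c%:C * z) = c * complex.Re z.
Proof. by case: z => a b /=; ring. Qed.

Lemma quad_Dm n (l : 'I_n -> R) (w : 'rV[C]_n) :
  complex.Re ((w *m Dm l *m adj w) 0 0) = \sum_k l k * nsq (w 0 k).
Proof.
rewrite mul_mx_diag !mxE Re_sum; apply: eq_bigr => k _; rewrite !mxE.
by case: (w 0 k) => a b; rewrite /nsq /=; ring.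
Qed.

Lemma quad_gram p (v : 'rV[C]_p) :
  complex.Re ((v *m adj v) 0 0) = \sum_k nsq (v 0 k).
Proof.
rewrite !mxE Re_sum; apply: eq_bigr => k _; rewrite !mxE.
by case: (v 0 k) => a b; rewrite /nsq /=; ring.
Qed.

Lemma inertia n r (P : 'M[C]_n) (l : 'I_n -> R) (x y : 'M[C]_(n, r)) (c : R) :
  P \is unitarymx -> 0 < c ->
  c%:C *: (adj P *m Dm l *m P) = x *m adj x - y *m adj y ->
  (#|[set i | (0 < l i)%R]| <= r)%N.
Proof.
move=> hP hc hD.
set S := [set i | (0 < l i)%R]; set p := #|S|.
rewrite leqNgt; apply/negP => hrp.
pose ES : 'M[C]_(p, n) := \matrix_(a, k) ((k == enum_val a)%:R).
have hES : ES *m ES^T = 1%:M.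
  apply/matrixP => a b; rewrite !mxE (bigD1 (enum_val a)) //= big1.
    by rewrite !mxE eqxx mul1r addr0 (inj_eq enum_val_inj) eq_sym.
  by move=> k hk; rewrite !mxE (negPf hk) mul0r.
pose M := ES *m P *m x.
have hk : (0 < \rank (kermx M))%N.
  rewrite mxrank_ker subn_gt0.
  by apply: leq_ltn_trans (rank_leq_col M) hrp.
have [i0 hi0] : exists i0, row i0 (kermx M) != 0.
  apply/existsP; apply: contraLR hk; rewrite negb_exists => /forallP h0.
  rewrite -leqNgt leqn0 mxrank_eq0; apply/eqP/row_matrixP => i.
  by rewrite row0; apply/eqP; move: (h0 i); rewrite negbK.
set u := row i0 (kermx M) in hi0.
have huM : u *m M = 0 by rewrite /u -row_mul mulmx_ker row0.
pose w := u *m ES.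
have hwS : forall k, k \notin S -> w 0 k = 0.
  move=> k hkS; rewrite !mxE big1 // => a _; rewrite !mxE.
  case: eqP => [hka|]; last by rewrite mulr0.
  by move: hkS; rewrite hka enum_valP.
have hw0 : w != 0.
  apply: contra hi0 => /eqP hw.
  by rewrite -[u]mulmx1 -hES mulmxA -/w hw mul0mx.
pose z := w *m P.
have hzx : z *m x = 0.
  by rewrite /z /w -huM /M !mulmxA.
have hzH : z *m (adj P *m Dm l *m P) *m adj z = w *m Dm l *m adj w.
  rewrite /z (adjM w P) !mulmxA -(mulmxA w P (adj P)) (unitary_mulC hP) mulmx1.
  by rewrite -(mulmxA (w *m Dm l) P (adj P)) (unitary_mulC hP) mulmx1.
have hQ : c%:C *: (w *m Dm l *m adj w) = - ((z *m y) *m adj (z *m y)).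
  have := congr1 (fun A => z *m A *m adj z) hD.
  rewrite /= mulmxBr mulmxBl !mulmxA hzx !mul0mx sub0r.
  rewrite -[z *m y *m adj y *m adj z]mulmxA -adjM => <-.
  by rewrite -hzH -scalemxAr -scalemxAl.
have := congr1 (fun A : 'M[C]_1 => complex.Re (A 0 0)) hQ.
rewrite /= mxE ReMC quad_Dm mxE ReN quad_gram => hsum.
have hsum_ge0 : forall k, 0 <= l k * nsq (w 0 k).
  move=> k; case: (boolP (k \in S)) => hkS.
    by rewrite mulr_ge0 ?nsq_ge0 //; apply: ltW; move: hkS; rewrite inE.
  by rewrite hwS // nsq0 mulr0.
have hs0 : \sum_k l k * nsq (w 0 k) = 0.
  apply/eqP; rewrite eq_le sumr_ge0 ?andbT //.
  have : c * (\sum_k l k * nsq (w 0 k)) <= 0.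
    by rewrite hsum oppr_le0 sumr_ge0 // => k _; apply: nsq_ge0.
  by rewrite pmulr_rle0.
move: hw0; apply/negP; rewrite negbK; apply/eqP/rowP => k; rewrite [RHS]mxE.
case: (boolP (k \in S)) => hkS; last by rewrite hwS.
have := psumr_eq0P (fun k _ => hsum_ge0 k) hs0 (i := k) isT.
move/eqP; rewrite mulf_eq0 => /orP[/eqP hl|/eqP /nsq_eq0 ->].
  by move: hkS; rewrite inE hl ltxx.
by [].
Qed.

End Inertia.

End Part3.
Import Part3.

Module Part4.
Local Open Scope ring_scope.
Local Open Scope sesquilinear_scope.
Local Open Scope complex_scope.

Section Compress.
Variable R : realType.
Local Notation C := (R[i]).

Lemma adj_nat p q (b : 'I_p -> 'I_q -> nat) :
  adj (\matrix_(i, j) ((b i j)%:R : C)) = (\matrix_(i, j) ((b i j)%:R : C))^T.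
Proof. by apply/matrixP => i j; rewrite !mxE conjc_nat. Qed.

Lemma compress n r (P : 'M[C]_n) (m : 'I_n -> R) :
  P \is unitarymx -> (#|[set i | (m i != 0)%R]| <= r)%N ->
  exists x' : 'M[C]_(n, r),
    x' *m adj x' = adj P *m Dm (fun i => m i ^+ 2) *m P.
Proof.
move=> hP hS.
set S := [set i | (m i != 0)%R] in hS *; set p := #|S| in hS *.
pose ES : 'M[C]_(p, n) := \matrix_(a, k) ((k == enum_val a)%:R).
pose Pi : 'M[C]_(p, r) := pid_mx p.
have hPi : Pi = \matrix_(i, j) (((i == j :> nat) && (i < p)%N)%:R) .
  by apply/matrixP => i j; rewrite !mxE.
have hadjPi : adj Pi = pid_mx p.
  by rewrite hPi adj_nat -hPi /Pi tr_pid_mx.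
have hadjES : adj (ES^T) = ES.
  rewrite adjE trmxK; apply/matrixP => i j; by rewrite !mxE conjC_nat.
have hEE : ES^T *m ES = \matrix_(k, l) (((k \in S) && (k == l))%:R).
  apply/matrixP => k l; rewrite !mxE.
  case: (boolP (k \in S)) => hk /=.
    rewrite (bigD1 (enum_rank_in hk k)) //= big1.
      by rewrite !mxE enum_rankK_in // eqxx mul1r addr0 eq_sym.
    move=> a ha; rewrite !mxE; case: eqP => [hka|]; last by rewrite mul0r.
    by move: ha; rewrite -{1}(enum_valK_in hk a) -hka eqxx.
  rewrite big1 // => a _; rewrite !mxE; case: eqP => [hka|]; last by rewrite mul0r.
  by move: hk; rewrite hka enum_valP.
pose G := ES^T *m Pi.
exists (adj P *m Dm m *m G).
rewrite (adjM (adj P *m Dm m) G) (adjM (adj P) (Dm m)) adjK adj_Dm /G.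
rewrite (adjM (ES^T) Pi) hadjPi hadjES.
have hPP : Pi *m pid_mx p = 1%:M.
  by rewrite /Pi pid_mx_id // pid_mx_1.
rewrite !mulmxA -(mulmxA _ Pi) hPP mulmx1.
congr (_ *m _); rewrite -!mulmxA; congr (_ *m _); rewrite !mulmxA.
rewrite -(mulmxA (Dm m)) hEE mul_diag_mx mul_mx_diag; apply/matrixP => k l; rewrite !mxE.
case: (boolP (k \in S)) => hk /=.
  by case: eqP => [->|_]; rewrite ?mulr1 ?mulr0 ?mulr1n ?mulr0n ?mul0r // -expr2 -rmorphXn.
have hm : m k = 0 by apply/eqP; move: hk; rewrite inE negbK.
by rewrite hm mulr0 mul0r expr2 mulr0; case: (k == l).
Qed.

End Compress.

End Part4.
Import Part4.

Module Part5.
Local Open Scope ring_scope.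
Local Open Scope sesquilinear_scope.
Local Open Scope complex_scope.

Section Decomp.
Variable R : realType.
Local Notation C := (R[i]).

Lemma Dm_sub n (f g : 'I_n -> R) : Dm f - Dm g = Dm (fun i => f i - g i).
Proof.
apply/matrixP => i j; rewrite !mxE.
case: eqP => _ /=; rewrite ?mulr1n ?mulr0n ?subr0 //.
by apply/eqP; rewrite eq_complex /= subrr !eqxx.
Qed.

Lemma Dm_opp n (f : 'I_n -> R) : Dm (fun i => - f i) = - Dm f.
Proof.
apply/matrixP => i j; rewrite !mxE.
case: eqP => _ /=; rewrite ?mulr1n ?mulr0n ?oppr0 //.
by apply/eqP; rewrite eq_complex /= oppr0 !eqxx.
Qed.

Lemma Dm_mul n (f g : 'I_n -> R) : Dm f *m Dm g = Dm (fun i => f i * g i).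
Proof.
rewrite /Dm mulmx_diag; congr diag_mx; apply/rowP => i; rewrite !mxE.
by apply/eqP; rewrite eq_complex /= !mul0r !mulr0 subr0 addr0 !eqxx.
Qed.

Lemma Dm_ext n (f g : 'I_n -> R) : (forall i, f i = g i) -> Dm f = Dm g.
Proof. by move=> h; apply/matrixP => i j; rewrite !mxE h. Qed.

Lemma Re_tr_Dm n (f : 'I_n -> R) : complex.Re (\tr (Dm f)) = \sum_i f i.
Proof. by rewrite /Dm mxtrace_diag Re_sum; apply: eq_bigr => i _; rewrite mxE. Qed.

Lemma tr_unitary_conj n (P A : 'M[C]_n) : P \is unitarymx ->
  \tr (adj P *m A *m P) = \tr A.
Proof. by move=> hP; rewrite mxtrace_mulC mulmxA (unitary_mulC hP) mul1mx. Qed.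

Lemma frob2_spec n (P : 'M[C]_n) (l : 'I_n -> R) : P \is unitarymx ->
  frob2 (adj P *m Dm l *m P) = \sum_i l i ^+ 2.
Proof.
move=> hP; rewrite frob2E (adjM (adj P *m Dm l) P) (adjM (adj P) (Dm l)) adjK adj_Dm.
rewrite !mulmxA -(mulmxA _ P (adj P)) (unitary_mulC hP) mulmx1.
rewrite -(mulmxA _ (Dm l) (Dm l)) Dm_mul tr_unitary_conj // Re_tr_Dm.
by apply: eq_bigr => i _; rewrite expr2.
Qed.

Lemma frob2_gram n r (P : 'M[C]_n) (f : 'I_n -> R) (x : 'M[C]_(n, r)) :
  P \is unitarymx -> x *m adj x = adj P *m Dm f *m P ->
  frob2 x = \sum_i f i.
Proof. by move=> hP hx; rewrite frob2E hx tr_unitary_conj // Re_tr_Dm. Qed.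

Lemma decomp n r (D : 'M[C]_n) (x y : 'M[C]_(n, r)) (c : R) :
  0 < c -> adj D = D -> c%:C *: D = x *m adj x - y *m adj y -> frob2 D = 1 ->
  exists x' y' : 'M[C]_(n, r),
    D = x' *m adj x' - y' *m adj y' /\ frob2 x' <= n%:R /\ frob2 y' <= n%:R.
Proof.
move=> hc hH hD hF.
have [P [l [hP hPl]]] := spectral_herm hH.
have hl1 : forall i, l i ^+ 2 <= 1.
  move=> i; rewrite -hF hPl frob2_spec // (bigD1 i) //= lerDl.
  by apply: sumr_ge0 => j _; apply: sqr_ge0.
pose mu i := if 0 < l i then Num.sqrt (l i) else 0.
pose nu i := if l i < 0 then Num.sqrt (- l i) else 0.
have hmu2 : forall i, mu i ^+ 2 = if 0 < l i then l i else 0.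
  by move=> i; rewrite /mu; case: ifP => h; rewrite ?sqr_sqrtr ?expr0n // ltW.
have hnu2 : forall i, nu i ^+ 2 = if l i < 0 then - l i else 0.
  by move=> i; rewrite /nu; case: ifP => h; rewrite ?sqr_sqrtr ?expr0n // oppr_ge0 ltW.
have hmuS : [set i | (mu i != 0)%R] = [set i | (0 < l i)%R].
  apply/setP => i; rewrite !inE /mu; case: ifP => h; last by rewrite eqxx.
  by rewrite sqrtr_eq0 -ltNge h.
have hnuS : [set i | (nu i != 0)%R] = [set i | (0 < - l i)%R].
  apply/setP => i; rewrite !inE /nu oppr_gt0; case: ifP => h; last by rewrite eqxx.
  by rewrite sqrtr_eq0 -ltNge oppr_gt0 h.
have hin1 : (#|[set i | (mu i != 0)%R]| <= r)%N.
  by rewrite hmuS; apply: (inertia (x := x) (y := y) hP hc); rewrite /Dm -hPl.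
have hin2 : (#|[set i | (nu i != 0)%R]| <= r)%N.
  rewrite hnuS; apply: (inertia (x := y) (y := x) hP hc).
  by rewrite Dm_opp mulmxN mulNmx scalerN /Dm -hPl hD opprB.
have [x' hx'] := compress hP hin1.
have [y' hy'] := compress hP hin2.
exists x', y'; split; last split.
- rewrite hx' hy' -mulmxBl -mulmxBr Dm_sub hPl; congr (_ *m _ *m _).
  apply: Dm_ext => i; rewrite hmu2 hnu2.
  case: (boolP (0 < l i)) => h1; case: (boolP (l i < 0)) => h2 /=;
    rewrite -?leNgt in h1 h2; lra.
- rewrite (frob2_gram hP hx') -[n in n%:R]card_ord -sumr_const.
  apply: ler_sum => i _; rewrite hmu2; case: ifP => h //.
  have := hl1 i; nra.
- rewrite (frob2_gram hP hy') -[n in n%:R]card_ord -sumr_const.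
  apply: ler_sum => i _; rewrite hnu2; case: ifP => h //.
  have := hl1 i; nra.
Qed.

End Decomp.

End Part5.
Import Part5.

From mathcomp Require Import all_analysis.
Module Part6.
Import numFieldNormedType.Exports.
Local Open Scope classical_set_scope.
Local Open Scope ring_scope.

Section Cont.
Variable R : realType.
Variable T : topologicalType.
Local Notation C := (R[i]).

Lemma contD (f g : T -> R) : continuous f -> continuous g -> continuous (fun v => f v + g v).
Proof. by move=> hf hg x; exact: (continuousD (hf x) (hg x)). Qed.
Lemma contM (f g : T -> R) : continuous f -> continuous g -> continuous (fun v => f v * g v).
Proof. by move=> hf hg x; exact: (continuousM (hf x) (hg x)). Qed.
Lemma contN (f : T -> R) : continuous f -> continuous (fun v => - f v).
Proof. by move=> hf x; exact: (continuousN (hf x)). Qed.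
Lemma contB (f g : T -> R) : continuous f -> continuous g -> continuous (fun v => f v - g v).
Proof. by move=> hf hg; apply: contD => //; apply: contN. Qed.
Lemma contC (c : R) : continuous (fun _ : T => c).
Proof. exact: cst_continuous. Qed.
Lemma cont_sum I (s : seq I) (P : pred I) (f : I -> T -> R) :
  (forall i, continuous (f i)) -> continuous (fun v => \sum_(i <- s | P i) f i v).
Proof.
move=> hf; elim: s => [|a s IH].
  by under eq_fun do rewrite big_nil; apply: contC.
under eq_fun do rewrite big_cons.
by case: (P a) => //; apply: contD.
Qed.


Definition ctsC (f : T -> C) :=
  continuous (fun v => complex.Re (f v)) /\ continuous (fun v => complex.Im (f v)).

Lemma ctsC_add (f g : T -> C) : ctsC f -> ctsC g -> ctsC (fun v => f v + g v).
Proof.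
move=> [f1 f2] [g1 g2]; split.
  have -> : (fun v => complex.Re (f v + g v)) = (fun v => complex.Re (f v) + complex.Re (g v)).
    by apply/funext => v; case: (f v) => a b; case: (g v).
  exact: contD.
have -> : (fun v => complex.Im (f v + g v)) = (fun v => complex.Im (f v) + complex.Im (g v)).
  by apply/funext => v; case: (f v) => a b; case: (g v).
exact: contD.
Qed.

Lemma ctsC_opp (f : T -> C) : ctsC f -> ctsC (fun v => - f v).
Proof.
move=> [f1 f2]; split.
  have -> : (fun v => complex.Re (- f v)) = (fun v => - complex.Re (f v)).
    by apply/funext => v; case: (f v).
  exact: contN.
have -> : (fun v => complex.Im (- f v)) = (fun v => - complex.Im (f v)).
  by apply/funext => v; case: (f v).
exact: contN.
Qed.

Lemma ctsC_sub (f g : T -> C) : ctsC f -> ctsC g -> ctsC (fun v => f v - g v).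
Proof. by move=> hf hg; apply: ctsC_add => //; apply: ctsC_opp. Qed.

Lemma ctsC_mul (f g : T -> C) : ctsC f -> ctsC g -> ctsC (fun v => f v * g v).
Proof.
move=> [f1 f2] [g1 g2]; split.
  have -> : (fun v => complex.Re (f v * g v)) =
    (fun v => complex.Re (f v) * complex.Re (g v) - complex.Im (f v) * complex.Im (g v)).
    by apply/funext => v; case: (f v) => a b; case: (g v).
  by apply: contB; apply: contM.
have -> : (fun v => complex.Im (f v * g v)) =
  (fun v => complex.Re (f v) * complex.Im (g v) + complex.Im (f v) * complex.Re (g v)).
  by apply/funext => v; case: (f v) => a b; case: (g v).
by apply: contD; apply: contM.
Qed.

Lemma ctsC_conj (f : T -> C) : ctsC f -> ctsC (fun v => Num.conj (f v)).
Proof.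
move=> [f1 f2]; split.
  have -> : (fun v => complex.Re (Num.conj (f v))) = (fun v => complex.Re (f v)).
    by apply/funext => v; case: (f v).
  by [].
have -> : (fun v => complex.Im (Num.conj (f v))) = (fun v => - complex.Im (f v)).
  by apply/funext => v; case: (f v).
exact: contN.
Qed.

Lemma ctsC_cst (c : C) : ctsC (fun _ => c).
Proof. by split; apply: contC. Qed.

Lemma ctsC_sum I (s : seq I) (P : pred I) (f : I -> T -> C) :
  (forall i, ctsC (f i)) -> ctsC (fun v => \sum_(i <- s | P i) f i v).
Proof.
move=> hf; elim: s => [|a s IH].
  by under eq_fun do rewrite big_nil; apply: ctsC_cst.
under eq_fun do rewrite big_cons.
by case: (P a) => //; apply: ctsC_add.
Qed.

Definition ctsM p q (F : T -> 'M[C]_(p, q)) := forall i j, ctsC (fun v => F v i j).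

Lemma ctsM_mul p q s (F : T -> 'M[C]_(p, q)) (G : T -> 'M[C]_(q, s)) :
  ctsM F -> ctsM G -> ctsM (fun v => F v *m G v).
Proof.
move=> hF hG i j; under eq_fun do rewrite mxE.
by apply: ctsC_sum => k; apply: ctsC_mul.
Qed.

Lemma ctsM_adj p q (F : T -> 'M[C]_(p, q)) : ctsM F -> ctsM (fun v => adj (F v)).
Proof. by move=> hF i j; under eq_fun do rewrite !mxE; apply: ctsC_conj. Qed.

Lemma ctsM_sub p q (F G : T -> 'M[C]_(p, q)) :
  ctsM F -> ctsM G -> ctsM (fun v => F v - G v).
Proof. by move=> hF hG i j; under eq_fun do rewrite !mxE; apply: ctsC_sub. Qed.

Lemma ctsM_cst p q (M : 'M[C]_(p, q)) : ctsM (fun _ => M).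
Proof. by move=> i j; apply: ctsC_cst. Qed.

Lemma ctsC_tr p (F : T -> 'M[C]_p) : ctsM F -> ctsC (fun v => \tr (F v)).
Proof. by move=> hF; apply: ctsC_sum => i; apply: hF. Qed.

End Cont.

End Part6.
Import Part6.

Module Part7.
Import numFieldNormedType.Exports.
Local Open Scope classical_set_scope.
Local Open Scope ring_scope.

Section Main.
Variables (R : realType) (n r m : nat) (A : 'I_m -> 'M[R[i]]_n).
Local Notation C := (R[i]).
Local Notation N := (n * ((r + r) + (r + r)))%N.
Local Notation V := 'rV[R]_N.

Definition Xof (v : V) : 'M[C]_(n, r) :=
  \matrix_(i, j) (Complex (lsubmx (lsubmx (vec_mx v)) i j) (rsubmx (lsubmx (vec_mx v)) i j)).
Definition Yof (v : V) : 'M[C]_(n, r) :=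
  \matrix_(i, j) (Complex (lsubmx (rsubmx (vec_mx v)) i j) (rsubmx (rsubmx (vec_mx v)) i j)).
Definition enc (x y : 'M[C]_(n, r)) : V :=
  mxvec (row_mx (row_mx (map_mx (@complex.Re R) x) (map_mx (@complex.Im R) x))
                (row_mx (map_mx (@complex.Re R) y) (map_mx (@complex.Im R) y))).

Lemma Xof_enc x y : Xof (enc x y) = x.
Proof.
apply/matrixP => i j; rewrite /Xof /enc mxE mxvecK !row_mxKl row_mxKr !mxE.
by case: (x i j).
Qed.

Lemma Yof_enc x y : Yof (enc x y) = y.
Proof.
apply/matrixP => i j; rewrite /Yof /enc mxE mxvecK !row_mxKr row_mxKl !mxE.
by case: (y i j).
Qed.

Lemma ctsM_Xof : ctsM Xof.
Proof.
move=> i j; split.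
  under eq_fun do rewrite mxE /= !mxE.
  exact: coord_continuous.
under eq_fun do rewrite mxE /= !mxE.
exact: coord_continuous.
Qed.

Lemma ctsM_Yof : ctsM Yof.
Proof.
move=> i j; split.
  under eq_fun do rewrite mxE /= !mxE.
  exact: coord_continuous.
under eq_fun do rewrite mxE /= !mxE.
exact: coord_continuous.
Qed.

Definition Dof (v : V) := Xof v *m adj (Xof v) - Yof v *m adj (Yof v).
Definition Gfun (v : V) :=
  vnorm2 (fun j => complex.Re (\tr (A j *m Dof v))).
Definition Ffun (v : V) := frob2 (Dof v).

Lemma ctsM_Dof : ctsM Dof.
Proof.
apply: ctsM_sub; apply: ctsM_mul; (try apply: ctsM_adj);
  (exact: ctsM_Xof || exact: ctsM_Yof).
Qed.

Lemma cont_Gfun : continuous Gfun.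
Proof.
apply: cont_sum => j; under eq_fun do rewrite expr2.
have h := (ctsC_tr (ctsM_mul (ctsM_cst _ (A j)) ctsM_Dof)).1.
exact: contM.
Qed.

Lemma cont_Ffun : continuous Ffun.
Proof.
apply: cont_sum => i; apply: cont_sum => j.
have [h1 h2] := ctsM_Dof i j.
by apply: contD; under eq_fun do rewrite expr2; apply: contM.
Qed.


Lemma Gfun_ge0 v : 0 <= Gfun v.
Proof. by apply: sumr_ge0 => j _; apply: sqr_ge0. Qed.

Lemma key_bound (B : R) : (forall v, Gfun v = 0 -> Ffun v = 0) ->
  exists2 e, 0 < e & forall v : V, (forall k, `|v ord0 k| <= B) -> Ffun v = 1 -> e <= Gfun v.
Proof.
move=> hz.
pose box := [set v : V | forall k, `[- B, B]%classic (v ord0 k)].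
have hbox : compact box.
  by apply: (@rV_compact R N (fun=> `[- B, B]%classic)) => _; exact: segment_compact.
pose K := box `&` (Ffun @^-1` [set x | x = 1]).
have hK : compact K.
  apply: compact_closedI => //; apply: preimage_closed; last exact: closed_eq.
  by move=> x _; apply: cont_Ffun.
pose I := Gfun @` K.
have hI : compact I.
  by apply: continuous_compact => //; apply: continuous_subspaceT; exact: cont_Gfun.
have hIc : closed I by apply: compact_closed => //; exact: Rhausdorff.
have h0 : ~ I 0.
  move=> [v [_ hv1] /hz]; rewrite /= in hv1; rewrite hv1 => /eqP.
  by rewrite oner_eq0.
have hn : nbhs (0 : R) (~` I).
  by apply: open_nbhs_nbhs; split => //; apply: closed_openC.
have /nbhs_ballP [e he hball] := hn.
exists e => // v hvB hv1.
rewrite leNgt; apply/negP => hlt.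
have hIv : I (Gfun v).
  exists v => //; split => //.
  by move=> k; rewrite /= in_itv /= -ler_norml.
apply: (hball (Gfun v)) => //.
rewrite /ball /= sub0r normrN ger0_norm //; exact: Gfun_ge0.
Qed.

End Main.

End Part7.
Import Part7.

Module Part8.
Import numFieldNormedType.Exports.
Local Open Scope ring_scope.

Section Fin.
Variable R : realType.
Local Notation C := (R[i]).

Lemma frob2_ge0 p q (M : 'M[C]_(p, q)) : 0 <= frob2 M.
Proof.
by apply: sumr_ge0 => i _; apply: sumr_ge0 => j _; apply: addr_ge0; apply: sqr_ge0.
Qed.

Lemma nsq_le_frob2 p q (M : 'M[C]_(p, q)) i j : nsq (M i j) <= frob2 M.
Proof.
rewrite /frob2 (bigD1 i) //= (bigD1 j) //= -addrA lerDl.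
apply: addr_ge0.
  by apply: sumr_ge0 => k _; apply: addr_ge0; apply: sqr_ge0.
by apply: sumr_ge0 => k _; apply: sumr_ge0 => l _; apply: addr_ge0; apply: sqr_ge0.
Qed.

Lemma frob2_eq0 p q (M : 'M[C]_(p, q)) : frob2 M = 0 -> M = 0.
Proof.
move=> h; apply/matrixP => i j; rewrite mxE; apply: nsq_eq0.
apply/eqP; rewrite eq_le nsq_ge0 andbT -h; exact: nsq_le_frob2.
Qed.

Lemma frob2_scale p q (a : R) (M : 'M[C]_(p, q)) :
  frob2 ((a%:C)%C *: M) = a ^+ 2 * frob2 M.
Proof.
rewrite /frob2 mulr_sumr; apply: eq_bigr => i _; rewrite mulr_sumr.
apply: eq_bigr => j _; rewrite !mxE.
by case: (M i j) => u w /=; ring.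
Qed.

Lemma abs_le_of_sq (a : R) (k : nat) : a ^+ 2 <= k%:R -> `|a| <= k%:R + 1.
Proof.
move=> h; have hk : (0 : R) <= k%:R by [].
rewrite ler_norml; apply/andP; split; nra.
Qed.

Lemma Re_bound p q (M : 'M[C]_(p, q)) (k : nat) i j : frob2 M <= k%:R ->
  `|complex.Re (M i j)| <= k%:R + 1 /\ `|complex.Im (M i j)| <= k%:R + 1.
Proof.
move=> h; have := le_trans (nsq_le_frob2 M i j) h; rewrite /nsq => h2.
split; apply: abs_le_of_sq; apply: le_trans h2.
  by rewrite lerDl sqr_ge0.
by rewrite lerDr sqr_ge0.
Qed.

Lemma beta_diff n r m (A : 'I_m -> 'M[C]_n) (x y : 'M[C]_(n, r)) j :
  beta A x j - beta A y j = complex.Re (\tr (A j *m (x *m adj x - y *m adj y))).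
Proof.
rewrite /beta mulmxBr mxtraceD linearN /= !mulmxA.
by case: (\tr (A j *m x *m adj x)) => a b; case: (\tr (A j *m y *m adj y)).
Qed.

End Fin.

Lemma hz_lemma (R : realType) (n r m : nat) (A : 'I_m -> 'M[R[i]]_n) :
  beta_injective_mod_U r A ->
  forall v, Gfun (n:=n) (r:=r) A v = 0 -> Ffun (n:=n) (r:=r) v = 0.
Proof.
move=> hinj v hG.
have hterm : forall j, complex.Re (\tr (A j *m Dof v)) = 0.
  move=> j; have := psumr_eq0P (fun j _ => sqr_ge0 (complex.Re (\tr (A j *m Dof v)))) hG (i := j) isT.
  by move/eqP; rewrite sqrf_eq0 => /eqP.
have hb : beta A (Xof v) =1 beta A (Yof v).
  move=> j; apply/eqP; rewrite -subr_eq0; apply/eqP.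
  by rewrite beta_diff -(hterm j).
have [U [hU hXY]] := hinj _ _ hb.
have hD : Dof v = 0.
  rewrite /Dof hXY (adjM (Yof v) U) !mulmxA -(mulmxA _ U (adj U)) hU mulmx1.
  by rewrite subrr.
rewrite /Ffun hD /frob2 big1 // => i _; rewrite big1 // => j _.
by rewrite mxE /= expr0n /= addr0.
Qed.


End Part8.
Import Part8.

Import numFieldNormedType.Exports.
Theorem proposition4p1 (R : realType) (n r m : nat) (A : 'I_m -> 'M[R[i]]_n) :
  (forall j, is_hermitian (A j)) -> (r <= n)%N ->
  beta_injective_mod_U r A ->
  (0 < a0 r A)%E.
Proof.
move=> hH hrn hinj.
have [e he hb] := key_bound (n:=n) (r:=r) (A:=A) (n%:R + 1) (hz_lemma hinj).
apply: (@lt_le_trans _ _ (e%:E)%E); first by rewrite lte_fin.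
apply: le_ereal_inf_tmp => _ [t [x [y [hxy ->]]] <-].
rewrite lee_fin.
set D := x *m adj x - y *m adj y.
have hD0 : D != 0 by rewrite /D subr_eq0.
set f := frob2 D.
have hf : 0 < f.
  rewrite lt_def frob2_ge0 andbT; apply: contra hD0 => /eqP h.
  by apply/eqP; apply: frob2_eq0.
set s := Num.sqrt f.
have hs : 0 < s by rewrite sqrtr_gt0.
have hs2 : s ^+ 2 = f by rewrite sqr_sqrtr // ltW.
set D' := ((s^-1)%:C)%C *: D.
have hHD : adj D = D.
  by rewrite /D adjB (adjM x (adj x)) (adjM y (adj y)) !adjK.
have hH' : adj D' = D'.
  have hHDe : forall i j, Num.conj (D j i) = D i j.
    by move=> i j; rewrite -[in RHS]hHD !mxE.
  apply/matrixP => i j.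
  have -> : adj D' i j = Num.conj (D' j i) by rewrite /adj !mxE.
  have -> : D' j i = (s^-1)%:C%C * D j i by rewrite mxE.
  have -> : D' i j = (s^-1)%:C%C * D i j by rewrite mxE.
  rewrite -hHDe; case: (D i j) => a b.
  by apply/eqP; rewrite eq_complex; apply/andP; split; apply/eqP => /=; ring.
have hss : ((s%:C)%C * (s^-1)%:C)%C = 1 :> R[i].
  apply/eqP; rewrite eq_complex /=; apply/andP; split; apply/eqP; last by ring.
  by field; rewrite gt_eqF.
have hcD : (s%:C)%C *: D' = x *m adj x - y *m adj y.
  by rewrite /D' scalerA hss scale1r.
have hF' : frob2 D' = 1.
  by rewrite /D' frob2_scale exprVn hs2 mulVf // gt_eqF.
have [x' [y' [hD' [hx' hy']]]] := decomp hs hH' hcD hF'.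
pose v := enc x' y'.
have hbnd : forall k, `|v ord0 k| <= n%:R + 1.
  rewrite /v /enc => k; case/mxvec_indexP: k => i j; rewrite mxvecE.
  case: (split_ordP j) => j1 ->; rewrite ?row_mxEl ?row_mxEr;
    case: (split_ordP j1) => j2 ->; rewrite ?row_mxEl ?row_mxEr mxE.
  - exact: (Re_bound _ _ hx').1.
  - exact: (Re_bound _ _ hx').2.
  - exact: (Re_bound _ _ hy').1.
  - exact: (Re_bound _ _ hy').2.
have hv1 : Ffun v = 1.
  by rewrite /Ffun /Dof /v Xof_enc Yof_enc -hD'.
have := hb v hbnd hv1.
have -> : Gfun A v = vnorm2 (fun j => beta A x j - beta A y j) / f; last by [].
rewrite /Gfun /Dof /v Xof_enc Yof_enc -hD' /vnorm2 mulr_suml.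
apply: eq_bigr => j _; rewrite beta_diff -/D /D' -scalemxAr mxtraceZ ReMC.
by rewrite exprMn exprVn hs2 mulrC.
Qed.
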